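(* Let $C>0$. There is a constant $C_1>0$ depending only on $C$ such that for any image width $w\geqslant2$ and any two lines $l,k$ that are integer at an image of width $w$ with different elevations $e_1\neq e_2$, $$N\bigl(s(l,C)\cap s(k,C)\bigr)\leqslant\frac{C_1 w}{|e_1-e_2|}.$$
   Context: For a line $l\subset\mathbb{R}^2$ and $C>0$, $s(l,C)=\{r\in\mathbb{R}^2\mid\rho(r,l)\leqslant C/2\}$, $\rho$ the Euclidean distance. A line is mostly horizontal inclined to the right if it has equation $y=ax+b$ with $0\leqslant a\leqslant1$; it is integer at an image of width $w$ if $a=\frac{e}{w-1}$ for some $e\in\{0,1,\dots,w-1\}$, called its elevation. For $D\subseteq\mathbb{R}^2$, $N(D)=|\mathbb{Z}^2\cap D|$. *)

(* Defs.v *)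
From Stdlib Require Import Reals List ZArith.
From Coquelicot Require Import Coquelicot.
Open Scope R_scope.

Definition point := (R * R)%type.
Definition region := point -> Prop.

Definition euclid (p q : point) : R :=
  sqrt ((fst p - fst q) ^ 2 + (snd p - snd q) ^ 2).

Definition line (a b : R) : region := fun p => snd p = a * fst p + b.

Definition rho (r : point) (l : region) : Rbar :=
  Glb_Rbar (fun d => exists p, l p /\ d = euclid r p).

Definition strip (l : region) (C : R) : region :=
  fun r => Rbar_le (rho r l) (Finite (C / 2)).

(* The line with elevation e in an image of width w:
   y = (e/(w-1)) x + b, e in {0, ..., w-1}. *)
Definition integer_line (w e : nat) (b : R) : region :=
  line (INR e / INR (w - 1)) b.

Definition inter (A B : region) : region := fun r => A r /\ B r.

Definition zpt (z : Z * Z) : point := (IZR (fst z), IZR (snd z)).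

(* N(D) <= M : every finite set of lattice points in D has at most M
   elements (equivalently |Z^2 ∩ D| <= M, finiteness included). *)
Definition N_le (D : region) (M : R) : Prop :=
  forall L : list (Z * Z), NoDup L ->
    (forall z, In z L -> D (zpt z)) -> INR (length L) <= M.

(* Main.v *)
Require Import Defs.
From Stdlib Require Import Reals List ZArith.
From Coquelicot Require Import Coquelicot.
From Stdlib Require Import Lra Lia Psatz.
Open Scope R_scope.

Lemma count_box (L : list (Z*Z)) (lo : Z) (F : Z -> Z) (nx ny : nat) :
  NoDup L ->
  (forall z, In z L -> (0 <= fst z - lo < Z.of_nat nx)%Z /\
                       (0 <= snd z - F (fst z) < Z.of_nat ny)%Z) ->
  (length L <= nx * ny)%nat.
Proof.
  intros HL Hin.
  set (g := fun z : Z*Z => (fst z - lo, snd z - F (fst z))%Z).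
  assert (HN : NoDup (map g L)).
  { apply NoDup_map_NoDup_ForallPairs; [|exact HL].
    intros [x y] [x' y'] _ _. unfold g; simpl. intros H. inversion H.
    assert (x = x') by lia. subst x'. f_equal. lia. }
  pose proof (NoDup_incl_length (l:=map g L) (l':=list_prod (map Z.of_nat (seq 0 nx)) (map Z.of_nat (seq 0 ny))) HN) as Hc.
  rewrite length_map in Hc.
  rewrite length_prod, !length_map, !length_seq in Hc.
  apply Hc. intros [a b] Hab.
  apply in_map_iff in Hab. destruct Hab as [[x y] [Hg Hxy]].
  unfold g in Hg; simpl in Hg. inversion Hg; subst a b.
  destruct (Hin _ Hxy) as [H1 H2]; simpl in H1, H2.
  apply in_prod_iff; split; apply in_map_iff.
  - exists (Z.to_nat (x - lo)); split; [lia|]. apply in_seq. lia.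
  - exists (Z.to_nat (y - F x)); split; [lia|]. apply in_seq. lia.
Qed.

Lemma int_count (r : R) : 0 <= r -> exists n : nat, INR n <= r + 1 /\
  forall k : Z, 0 <= IZR k <= r -> (0 <= k < Z.of_nat n)%Z.
Proof.
  intros hr. destruct (base_Int_part r) as [H1 H2].
  assert (Hp : (0 <= Int_part r)%Z).
  { assert (-1 < IZR (Int_part r)) by lra. apply lt_IZR in H. lia. }
  exists (S (Z.to_nat (Int_part r))). split.
  - rewrite S_INR, INR_IZR_INZ, Z2Nat.id by lia. lra.
  - intros k [Hk1 Hk2]. split; [apply le_IZR; lra|].
    assert (Hlt : IZR k - 1 < IZR (Int_part r)) by lra.
    rewrite <- minus_IZR in Hlt. apply lt_IZR in Hlt. lia.
Qed.

Lemma strip_bound (a b C : R) (x y : R) : 0 <= a <= 1 -> 0 < C ->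
  strip (line a b) C (x, y) -> Rabs (y - a * x - b) <= C.
Proof.
  intros ha hC Hs. unfold strip, rho in Hs.
  destruct (Rle_or_lt (Rabs (y - a * x - b)) C) as [H|H]; [exact H|exfalso].
  destruct (Glb_Rbar_correct (fun d => exists p, line a b p /\ d = euclid (x, y) p)) as [_ Hg].
  assert (Hlb : is_lb_Rbar (fun d => exists p, line a b p /\ d = euclid (x, y) p) (Finite (2 * C / 3))).
  { intros d [[p q] [Hp Hd]]. subst d. unfold line in Hp; simpl in Hp. subst q.
    unfold euclid; simpl. rewrite <- (sqrt_pow2 (2 * C / 3)) by lra.
    apply sqrt_le_1_alt.
    set (D := y - a * x - b). set (t := x - p).
    replace (y - (a * p + b)) with (D + a * t) by (unfold D, t; ring).
    assert (HD : C * C < D * D).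
    { unfold D. unfold Rabs in H. destruct (Rcase_abs (y - a * x - b)); nra. }
    assert (Hk : (1 + a*a) * (t*t + (D + a*t)*(D+a*t)) = D*D + (a*(D+a*t) + t)*(a*(D+a*t)+t)) by ring.
    assert (Hq : 0 <= (a*(D+a*t) + t)*(a*(D+a*t)+t)) by (pose proof (Rle_0_sqr (a*(D+a*t)+t)); unfold Rsqr in *; lra).
    assert (Hs2 : 0 <= t*t + (D + a*t)*(D+a*t)) by (pose proof (Rle_0_sqr t); pose proof (Rle_0_sqr (D+a*t)); unfold Rsqr in *; lra).
    assert (H2 : D * D <= 2 * (t*t + (D + a*t)*(D+a*t))).
    { assert (Ha2 : a*a <= 1) by nra.
      assert (0 <= (1 - a*a) * (t*t + (D + a*t)*(D+a*t))) by (apply Rmult_le_pos; lra).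
      lra. }
    simpl. nra. }
  specialize (Hg _ Hlb).
  pose proof (Rbar_le_trans _ _ _ Hg Hs) as Hc. simpl in Hc. lra.
Qed.

Theorem corollary1 (C : R) (hC : 0 < C) :
  exists C1 : R, 0 < C1 /\
    forall (w e1 e2 : nat) (b1 b2 : R),
      (2 <= w)%nat ->
      (e1 <= w - 1)%nat -> (e2 <= w - 1)%nat -> e1 <> e2 ->
      N_le (inter (strip (integer_line w e1 b1) C) (strip (integer_line w e2 b2) C))
           (C1 * INR w / Rabs (INR e1 - INR e2)).
Proof.
  exists ((4*C+2)*(2*C+2)). split; [nra|].
  intros w e1 e2 b1 b2 Hw He1 He2 Hne L HL Hin.
  set (W := INR (w - 1)).
  assert (HW1 : 1 <= W) by (unfold W; replace 1 with (INR 1) by reflexivity; apply le_INR; lia).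
  assert (HwW : INR w = W + 1) by (unfold W; rewrite minus_INR by lia; simpl; lra).
  assert (Hi1 : INR e1 <= W) by (apply le_INR; lia).
  assert (Hi2 : INR e2 <= W) by (apply le_INR; lia).
  pose proof (pos_INR e1). pose proof (pos_INR e2).
  set (E := INR e1 - INR e2). set (d := Rabs E).
  assert (Hd1 : 1 <= d).
  { unfold d, E. destruct (Nat.lt_total e1 e2) as [Hl|[Hl|Hl]]; [|lia|].
    - apply le_INR in Hl. rewrite S_INR in Hl. rewrite Rabs_left1; lra.
    - apply le_INR in Hl. rewrite S_INR in Hl. rewrite Rabs_pos_eq; lra. }
  assert (HdW : d <= W) by (unfold d, E; apply Rabs_le; lra).
  assert (HE0 : E <> 0) by (intro Hz0; unfold d in Hd1; rewrite Hz0, Rabs_R0 in Hd1; lra).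
  set (a1 := INR e1 / W). set (a2 := INR e2 / W).
  assert (Ha1 : 0 <= a1 <= 1).
  { unfold a1; split; [apply Rdiv_le_0_compat; lra|]. apply (Rmult_le_reg_r W); [lra|]; unfold Rdiv; rewrite Rmult_assoc, Rinv_l by lra; lra. }
  assert (Ha2 : 0 <= a2 <= 1).
  { unfold a2; split; [apply Rdiv_le_0_compat; lra|]. apply (Rmult_le_reg_r W); [lra|]; unfold Rdiv; rewrite Rmult_assoc, Rinv_l by lra; lra. }
  set (beta := W * (b1 - b2)).
  set (Rp := 2 * C * W / d).
  assert (HRp : 0 <= Rp) by (unfold Rp; apply Rdiv_le_0_compat; nra).
  set (xc := - beta / E).
  set (lo := Int_part (xc - Rp)).
  set (F := fun x : Z => Int_part (a1 * IZR x + b1 - C)).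
  destruct (int_count (2 * Rp + 1)) as [nx [Hnx Hx]]; [lra|].
  destruct (int_count (2 * C + 1)) as [ny [Hny Hy]]; [lra|].
  assert (Hlen : (length L <= nx * ny)%nat).
  { apply (count_box L lo F); [exact HL|].
    intros [p q] Hz. simpl. destruct (Hin _ Hz) as [S1 S2].
    unfold integer_line, zpt in S1, S2; simpl in S1, S2.
    apply strip_bound in S1; [|exact Ha1|exact hC].
    apply strip_bound in S2; [|exact Ha2|exact hC].
    fold W in S1, S2. fold a1 in S1. fold a2 in S2.
    set (x := IZR p) in *. set (y := IZR q) in *.
    assert (Hab : Rabs ((a1 - a2) * x + (b1 - b2)) <= 2 * C).
    { pose proof (proj1 (Rabs_le_between _ _) S1) as T1. pose proof (proj1 (Rabs_le_between _ _) S2) as T2.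
      apply Rabs_le. lra. }
    assert (HEx : Rabs (E * x + beta) <= 2 * C * W).
    { replace (E * x + beta) with (W * ((a1 - a2) * x + (b1 - b2)))
        by (unfold E, beta, a1, a2; field; lra).
      rewrite Rabs_mult, (Rabs_pos_eq W) by lra.
      rewrite (Rmult_comm (2*C) W). apply Rmult_le_compat_l; lra. }
    assert (Hxc : Rabs (x - xc) <= Rp).
    { assert (Heq : Rabs (x - xc) * d = Rabs (E * x + beta)).
      { unfold d. rewrite <- Rabs_mult. f_equal. unfold xc. field. exact HE0. }
      unfold Rp. apply (Rmult_le_reg_r d); [lra|].
      rewrite Heq. unfold Rdiv. rewrite Rmult_assoc, Rinv_l by lra. lra. }
    apply Rabs_le_between in Hxc.
    destruct (base_Int_part (xc - Rp)) as [L1 L2]. fold lo in L1, L2.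
    destruct (base_Int_part (a1 * x + b1 - C)) as [F1 F2].
    apply Rabs_le_between in S1.
    split.
    - apply Hx. rewrite minus_IZR. fold x. lra.
    - apply Hy. rewrite minus_IZR. fold y. unfold F. fold x. lra. }
  apply le_INR in Hlen. rewrite mult_INR in Hlen.
  pose proof (pos_INR nx). pose proof (pos_INR ny).
  eapply Rle_trans; [exact Hlen|].
  assert (Hprod : INR nx * INR ny <= (2 * Rp + 2) * (2 * C + 2)).
  { apply Rmult_le_compat; lra. }
  eapply Rle_trans; [exact Hprod|].
  fold d. rewrite HwW.
  set (id := / d).
  assert (Hid : d * id = 1) by (unfold id; field; lra).
  assert (Hid0 : 0 < id) by (unfold id; apply Rinv_0_lt_compat; lra).
  unfold Rp, Rdiv. fold id.
  assert (K : (4*C*W + 2*d)*(2*C+2) <= (4*C+2)*(2*C+2)*(W+1)) by nra.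
  pose proof (Rmult_le_compat_r id _ _ (Rlt_le _ _ Hid0) K) as K2.
  assert (E2 : (2 * (2 * C * W * id) + 2) * (2 * C + 2) = (4*C*W + 2*d)*(2*C+2) * id).
  { transitivity ((2 * (2 * C * W * id) + 2 * (d * id)) * (2 * C + 2)).
    - rewrite Hid. ring.
    - ring. }
  rewrite E2. lra.
Qed.
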